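(* Let $G$ be a chordal graph that is $1$-extendable and let $v$ be a simplicial vertex of $G$. Then $G-N[v]$ is $1$-extendable.
   Context: All graphs are finite and simple. A chordal graph is a graph with no induced cycle of length at least four. A vertex $v$ is simplicial if its neighbourhood $N(v)$ induces a complete graph; $N[v]=N(v)\cup\{v\}$. A graph is $1$-extendable if every vertex belongs to some maximum independent set. $G-N[v]$ denotes the subgraph of $G$ induced by $V(G)\setminus N[v]$. *)

(* Defs.v *)
From mathcomp Require Import all_boot.
Set Implicit Arguments. Unset Strict Implicit. Unset Printing Implicit Defensive.

Definition simple_graph (T : finType) (e : rel T) : Prop :=
  symmetric e /\ irreflexive e.

Definition nbhd (T : finType) (e : rel T) (v : T) : {set T} := [set u | e v u].
Definition cnbhd (T : finType) (e : rel T) (v : T) : {set T} := v |: nbhd e v.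

Definition clique (T : finType) (e : rel T) (A : {set T}) : Prop :=
  forall x y, x \in A -> y \in A -> x != y -> e x y.

Definition simplicial (T : finType) (e : rel T) (v : T) : Prop :=
  clique e (nbhd e v).

(* Chordal: no induced cycle of length >= 4. A cycle is given by a
   duplicate-free sequence c of vertices with consecutive (cyclically)
   vertices adjacent; it is induced iff there is no chord, i.e. no edge
   between two positions that are not cyclically consecutive. *)
Definition has_chord (T : finType) (e : rel T) (c : seq T) : Prop :=
  exists (x0 : T) (i j : nat),
    [&& i < size c, j < size c, i != j,
        j != (i.+1 %% size c), i != (j.+1 %% size c) &
        e (nth x0 c i) (nth x0 c j)].

Definition chordal (T : finType) (e : rel T) : Prop :=
  forall c : seq T, uniq c -> 4 <= size c -> cycle e c -> has_chord e c.

Definition independent_in (T : finType) (e : rel T) (V A : {set T}) : Prop :=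
  A \subset V /\ forall x y, x \in A -> y \in A -> ~~ e x y.

Definition max_independent_in (T : finType) (e : rel T) (V A : {set T}) : Prop :=
  independent_in e V A /\
  forall B : {set T}, independent_in e V B -> #|B| <= #|A|.

Definition one_extendable_in (T : finType) (e : rel T) (V : {set T}) : Prop :=
  forall x, x \in V -> exists A, max_independent_in e V A /\ x \in A.

Definition one_extendable (T : finType) (e : rel T) : Prop :=
  one_extendable_in e [set: T].

(* Main.v *)
Require Import Defs.
From mathcomp Require Import all_boot.

Theorem lemma4 (T : finType) (e : rel T) (v : T) :
  simple_graph e -> chordal e -> one_extendable e -> simplicial e v ->
  one_extendable_in e (~: cnbhd e v).
Proof.
rewrite /one_extendable_in; move=> [esym eirr] _ oneE simp x xV.
have oneE' : forall y, exists A, max_independent_in e [set: T] A /\ y \in A.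
  by move=> y; apply: oneE; rewrite inE.

have [S [[[_ Sind] Smax] xS]] := oneE' x.
exists (S :\: cnbhd e v); split; last by rewrite inE xS andbT -in_setC.
have inN : forall u, (u \in cnbhd e v) = (u == v) || e v u.
  by move=> u; rewrite /cnbhd /nbhd !inE.
split.
  split; first by apply/subsetP => u; rewrite !inE => /andP[].
  by move=> a b; rewrite !inE => /andP[_ aS] /andP[_ bS]; apply: Sind.
move=> B [BV Bind].
have vB : v \notin B.
  apply/negP => /(subsetP BV); by rewrite inE inN eqxx.
have indvB : independent_in e [set: T] (v |: B).
  split; first exact: subsetT.
  have nv : forall b, b \in B -> ~~ e v b.
    move=> b /(subsetP BV); rewrite inE inN negb_or => /andP[_ ->] //.
  move=> a b; rewrite !inE => /orP[/eqP-> | aB] /orP[/eqP-> | bB].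
  - by rewrite eirr.
  - exact: nv.
  - by rewrite esym; exact: nv.
  - exact: Bind.
have h1 := Smax _ indvB.
rewrite cardsU1 vB add1n in h1.
have h2 : #|S :&: cnbhd e v| <= 1.
  apply/card_le1_eqP => a b; rewrite !inE => /andP[aS aN] /andP[bS bN].
  apply/eqP; apply/negPn/negP => ab.
  have : e a b.
    move: ab aN bN; rewrite /= => ab /orP[/eqP ea | va] /orP[/eqP eb | vb].
    - by rewrite ea eb eqxx in ab.
    - by rewrite ea.
    - by rewrite eb esym.
    - by apply: (simp a b); rewrite /nbhd ?inE // eq_sym.
  by rewrite (negbTE (Sind _ _ aS bS)).
rewrite -(cardsID (cnbhd e v) S) in h1.
rewrite -ltnS; apply: (leq_trans h1).
by rewrite -add1n leq_add2r.
Qed.
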